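(* Let $G$ be a nontrivial graph of order $n$, not isomorphic to $K_n$, such that $\beta_p(G)=n-h$ and $\tau(G)=\tau>\frac{n}{2}$. Let $W$ be its $\tau$-set. Then $n-2h\le\tau\le n-h-1$ if and only if $G[W]\cong K_\tau$.
   Context: All graphs are finite, simple, undirected and connected. Two vertices $u,v$ are twins if $N(u)\setminus\{v\}=N(v)\setminus\{u\}$; the twin number $\tau(G)$ is the maximum cardinality of an equivalence class of the twin relation; a $\tau$-set is a set of pairwise twin vertices of cardinality $\tau(G)$. For a partition $\Pi=\{S_1,\dots,S_k\}$ of $V(G)$, $r(u|\Pi)=(d(u,S_1),\dots,d(u,S_k))$ with $d(u,S)=\min_{w\in S}d(u,w)$; $\Pi$ is locating if $r(u|\Pi)\ne r(v|\Pi)$ for all distinct $u,v$; $\beta_p(G)$ is the minimum size of a locating partition. *)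

(* Defs.v *)
(* A graph is a symmetric irreflexive relation e on a finType T. *)
From mathcomp Require Import all_boot.
Set Implicit Arguments. Unset Strict Implicit. Unset Printing Implicit Defensive.

Section Graphs.
Variables (T : finType) (e : rel T).

Definition simple_connected_graph : Prop :=
  [/\ symmetric e, irreflexive e & forall u v : T, connect e u v].

Definition nbhd (u : T) : {set T} := [set v | e u v].

Fixpoint ball (k : nat) (u : T) : {set T} :=
  match k with
  | 0 => [set u]
  | k'.+1 => ball k' u :|: \bigcup_(w in ball k' u) nbhd w
  end.

(* graph distance: least k with v in ball k u (for connected graphs this is < #|T|) *)
Definition dist (u v : T) : nat := find (fun k => v \in ball k u) (iota 0 #|T|).

Definition dist_set (u : T) (S : {set T}) : nat :=
  \big[minn/#|T|]_(w in S) dist u w.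

(* locating partition: for distinct u v some class S has d(u,S) <> d(v,S);
   this is equivalent to r(u|Pi) <> r(v|Pi) for any ordering of the classes *)
Definition locating (P : {set {set T}}) : bool :=
  partition P [set: T] &&
  [forall u, forall v, (u != v) ==> [exists S in P, dist_set u S != dist_set v S]].

Definition beta_p : nat :=
  \big[minn/#|T|]_(P : {set {set T}} | locating P) #|P|.

Definition twin (u v : T) : bool := (nbhd u :\ v) == (nbhd v :\ u).

Definition twin_class (u : T) : {set T} := [set v | twin u v].

Definition twin_number : nat := \max_(u : T) #|twin_class u|.

Definition tau_set (W : {set T}) : Prop :=
  {in W &, forall x y, twin x y} /\ #|W| = twin_number.

(* W induces a complete graph: G[W] is isomorphic to K_|W| *)
Definition clique (W : {set T}) : Prop :=
  {in W &, forall x y, x != y -> e x y}.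

Definition complete_graph : Prop := forall u v : T, u != v -> e u v.

End Graphs.

(* Main.v *)
Require Import Defs.
From mathcomp Require Import all_boot zify.
Set Implicit Arguments. Unset Strict Implicit. Unset Printing Implicit Defensive.

Lemma bigmin_le (I : finType) (P : pred I) (F : I -> nat) x0 i :
  P i -> \big[minn/x0]_(j | P j) F j <= F i.
Proof.
move=> Pi; rewrite -big_filter.
have : i \in filter P (index_enum I) by rewrite mem_filter Pi mem_index_enum.
elim: (filter P _) => //= a l IH; rewrite in_cons big_cons.
case/orP => [/eqP <- | /IH]; first exact: geq_minl.
exact: leq_trans (geq_minr _ _).
Qed.

Section Basic.
Variables (T : finType) (e : rel T).
Hypothesis esym : symmetric e.
Hypothesis eirr : irreflexive e.
Hypothesis hn : 1 < #|T|.

Lemma iotaE : iota 0 #|T| = [:: 0, 1 & iota 2 (#|T| - 2)].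
Proof. have [k ->] : exists k, #|T| = k.+2 by exists (#|T| - 2); lia.
by congr [:: _, _ & iota 2 _]; lia. Qed.

Lemma ball1 u v : (v \in ball e 1 u) = (v == u) || e u v.
Proof. by rewrite /= big_set1 !inE. Qed.

Lemma dist_self u : dist e u u = 0.
Proof. by rewrite /dist iotaE /= inE eqxx. Qed.

Lemma dist_gt0 u v : u != v -> 0 < dist e u v.
Proof. by move=> uv; rewrite /dist iotaE /= inE eq_sym (negbTE uv). Qed.

Lemma dist_edge u v : u != v -> e u v -> dist e u v = 1.
Proof.
by move=> uv euv; rewrite /dist iotaE /= ball1 inE eq_sym (negbTE uv) euv.
Qed.

Lemma dist_gt1 u v : u != v -> ~~ e u v -> 1 < dist e u v.
Proof.
by move=> uv euv; rewrite /dist iotaE /= ball1 inE eq_sym (negbTE uv) (negbTE euv).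
Qed.

Lemma ds_in u (S : {set T}) : u \in S -> dist_set e u S = 0.
Proof. by move=> uS; apply/eqP; rewrite -leqn0 -(dist_self u); exact: bigmin_le. Qed.

Lemma ds_gt0 u (S : {set T}) : u \notin S -> 0 < dist_set e u S.
Proof.
move=> uS; rewrite /dist_set; apply: (big_ind (fun x => 0 < x)); first lia.
- by move=> x y; rewrite leq_min => -> ->.
- by move=> s sS; apply: dist_gt0; apply: contraNneq uS => ->.
Qed.

Lemma ds_1 u s (S : {set T}) : u \notin S -> s \in S -> e u s -> dist_set e u S = 1.
Proof.
move=> uS sS eus; apply/eqP; rewrite eqn_leq ds_gt0 // andbT.
rewrite -(dist_edge (u := u) (v := s)) //; first exact: bigmin_le.
by apply: contraNneq uS => ->.
Qed.

Lemma ds_n1 u (S : {set T}) : u \notin S -> (forall s, s \in S -> ~~ e u s) -> dist_set e u S != 1.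
Proof.
move=> uS H; suff : 1 < dist_set e u S by case: (dist_set _ _ _) => [|[]].
rewrite /dist_set; apply: (big_ind (fun x => 1 < x)) => //.
- by move=> x y; rewrite leq_min => -> ->.
- move=> s sS; apply: dist_gt1; last exact: H.
  by apply: contraNneq uS => ->.
Qed.

Lemma twinE u v z : twin e u v -> z != u -> z != v -> e u z = e v z.
Proof.
move=> /eqP/setP/(_ z); rewrite !inE => H zu zv.
by move: H; rewrite zu zv.
Qed.

End Basic.

Section Main.
Variables (T : finType) (e : rel T).
Hypothesis esym : symmetric e.
Hypothesis eirr : irreflexive e.
Hypothesis hn : 1 < #|T|.
Variable W : {set T}.
Hypothesis Wtw : {in W &, forall x y, twin e x y}.
Hypothesis Wcard : #|W| = twin_number e.
Hypothesis Wbig : #|T| < 2 * #|W|.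

Lemma notwin w x : w \in W -> x \notin W -> ~~ twin e w x.
Proof.
move=> wW xW; apply/negP => twx.
have sub : x |: W \subset twin_class e w.
  apply/subsetP => y; rewrite !inE => /orP [/eqP -> // | yW].
  exact: Wtw.
have := subset_leq_card sub; rewrite cardsU1 xW Wcard.
have : #|twin_class e w| <= twin_number e.
  by rewrite /twin_number; exact: (leq_bigmax_cond (F := fun u => #|twin_class e u|)).
lia.
Qed.

Lemma transfer w w' z : w \in W -> w' \in W -> z \notin W -> e w z = e w' z.
Proof.
move=> wW w'W zW; have [-> //|ww'] := eqVneq w w'.
apply: twinE; first exact: Wtw.
- by apply: contraNneq zW => ->.
- by apply: contraNneq zW => ->.
Qed.

Lemma Wadj3 p q r : p \in W -> q \in W -> r \in W -> p != q -> p != r -> e p q = e p r.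
Proof.
move=> pW qW rW pq pr; have [-> //|qr] := eqVneq q r.
rewrite esym [e p r]esym; apply: twinE => //; exact: Wtw.
Qed.

Lemma Wadj u v p q : u \in W -> v \in W -> p \in W -> q \in W -> u != v -> p != q ->
  e u v = e p q.
Proof.
move=> uW vW pW qW uv pq.
have [eup | up] := eqVneq u p; first by subst u; exact: Wadj3.
rewrite (Wadj3 uW vW pW uv up) esym; apply: Wadj3 => //; by rewrite eq_sym.
Qed.

Lemma W0 : exists w0, w0 \in W.
Proof. apply/card_gt0P; lia. Qed.

Lemma ds_set1 u s (S : {set T}) : (forall v, (v \in S) = (v == s)) -> u != s ->
  (dist_set e u S == 1) = e u s.
Proof.
move=> HS us; have uS : u \notin S by rewrite HS.
case eus: (e u s); first by rewrite (ds_1 hn uS _ eus) ?HS.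
apply/negbTE/ds_n1 => // v; rewrite HS => /eqP ->; by rewrite eus.
Qed.

Lemma ds_set2 u s t (S : {set T}) : (forall v, (v \in S) = (v == s) || (v == t)) ->
  u != s -> u != t -> (dist_set e u S == 1) = e u s || e u t.
Proof.
move=> HS us ut; have uS : u \notin S by rewrite HS negb_or us ut.
case eus: (e u s); first by rewrite (ds_1 hn uS _ eus) ?HS ?eqxx.
case eut: (e u t); first by rewrite (ds_1 hn uS _ eut) ?HS ?eqxx ?orbT.
apply/negbTE/ds_n1 => // v; rewrite HS => /orP [] /eqP ->; by rewrite ?eus ?eut.
Qed.


Section Cons.
Variable Z : {set T}.
Variable w0 : T.
Hypothesis w0W : w0 \in W.

Definition Yset := ~: W :\: Z.
Definition fY (x : T) := nth w0 (enum W) (index x (enum Yset)).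
Definition wu := nth w0 (enum W) (size (enum Yset)).
Definition gY v := if v \in Yset then fY v else v.
Definition Cl s := [set y in [set: T] | gY s == gY y].

Hypothesis Ysmall : #|Yset| < #|W|.

Lemma sizeY : size (enum Yset) < size (enum W).
Proof. by rewrite -!cardE. Qed.

Lemma idx_lt x : x \in Yset -> index x (enum Yset) < size (enum W).
Proof. move=> xY; apply: ltn_trans sizeY; by rewrite index_mem mem_enum. Qed.

Lemma fY_W x : x \in Yset -> fY x \in W.
Proof.
move=> xY; rewrite /fY -mem_enum; apply: mem_nth.
exact: idx_lt.
Qed.

Lemma fY_inj x y : x \in Yset -> y \in Yset -> fY x = fY y -> x = y.
Proof.
move=> xY yY /eqP; rewrite /fY nth_uniq ?enum_uniq //; first last.
- exact: idx_lt.
- exact: idx_lt.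
move/eqP=> H.
have xs : x \in enum Yset by rewrite mem_enum.
have ys : y \in enum Yset by rewrite mem_enum.
by rewrite -(nth_index x xs) -(nth_index x ys) H.
Qed.

Lemma wu_W : wu \in W.
Proof. by rewrite /wu -mem_enum; apply: mem_nth; exact: sizeY. Qed.

Lemma wu_neq x : x \in Yset -> fY x != wu.
Proof.
move=> xY; rewrite /fY /wu nth_uniq ?enum_uniq //; last exact: sizeY.
- by rewrite neq_ltn index_mem mem_enum xY.
- exact: idx_lt.
Qed.

Lemma gY_nY v : v \notin Yset -> gY v = v.
Proof. by rewrite /gY => /negbTE ->. Qed.

Lemma inY x : (x \in Yset) = (x \notin W) && (x \notin Z).
Proof. by rewrite !inE andbC. Qed.

Lemma Cl_wu v : (v \in Cl wu) = (v == wu).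
Proof.
have wuY : wu \notin Yset by rewrite inY wu_W.
rewrite !inE (gY_nY wuY) /gY; case vY: (v \in Yset); last by rewrite eq_sym.
rewrite eq_sym (negbTE (wu_neq vY)) /=.
by symmetry; apply/negbTE; apply: contraTneq vY => ->.
Qed.

Lemma Cl_Y y v : y \in Yset -> (v \in Cl y) = (v == y) || (v == fY y).
Proof.
move=> yY; rewrite !inE /gY yY; case vY: (v \in Yset).
- rewrite /=. rewrite [fY y == _]eq_sym; case: (eqVneq v y) => [-> | vy]; first by rewrite eqxx.
  case: (eqVneq (fY v) (fY y)) => [/(fY_inj vY yY) E | ] //=; first by rewrite E eqxx in vy.
  symmetry; apply/negbTE; apply: contraTneq vY => ->; by rewrite inY fY_W.
- rewrite eq_sym; case: (eqVneq v y) => [E | _ //]; by rewrite E yY in vY.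
Qed.

Lemma Cl_Z z v : z \in Z -> z \notin W -> (v \in Cl z) = (v == z).
Proof.
move=> zZ zW; have zY : z \notin Yset by rewrite inY zZ andbF.
rewrite !inE (gY_nY zY) /gY; case vY: (v \in Yset); last by rewrite eq_sym.
have h1 : z != fY v by apply: contraNneq zW => ->; exact: fY_W.
have h2 : v != z by apply: contraTneq vY => ->.
by rewrite /= (negbTE h1) (negbTE h2).
Qed.

Lemma cons_ok :
  (forall x, x \in Yset -> exists s, dist_set e x (Cl s) != dist_set e (fY x) (Cl s)) ->
  beta_p e <= #|W| + #|Z|.
Proof.
move=> H.
set P := preim_partition gY [set: T].
have ClP s : Cl s \in P by apply: imset_f; rewrite inE.
have loc : locating e P.
  rewrite /locating preim_partitionP /=.
  apply/forallP => u; apply/forallP => v; apply/implyP => uv.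
  case: (eqVneq (gY u) (gY v)) => guv.
  - case uY: (u \in Yset); case vY: (v \in Yset).
    + by move: guv; rewrite /gY uY vY => /(fY_inj uY vY) /eqP; rewrite (negbTE uv).
    + move: guv; rewrite /gY uY vY => fuv.
      have [s Hs] := H u uY; apply/existsP; exists (Cl s); rewrite ClP /=.
      by rewrite -fuv.
    + move: guv; rewrite /gY uY vY => fuv.
      have [s Hs] := H v vY; apply/existsP; exists (Cl s); rewrite ClP /=.
      by rewrite fuv eq_sym.
    + by move: guv; rewrite /gY uY vY => /eqP; rewrite (negbTE uv).
  - apply/existsP; exists (Cl u); rewrite ClP /= (ds_in e hn); last by rewrite !inE eqxx.
    rewrite eq_sym -lt0n; apply: (ds_gt0 e hn); by rewrite !inE.
have h1 : beta_p e <= #|P| by rewrite /beta_p; exact: bigmin_le.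
have h2 : #|P| <= #|gY @: [set: T]|.
  rewrite /P /preim_partition /equivalence_partition.
  rewrite (imset_comp (fun c => [set y in [set: T] | c == gY y]) gY).
  exact: leq_imset_card.
have h3 : gY @: [set: T] \subset W :|: Z.
  apply/subsetP => y /imsetP [v _ ->]; rewrite inE.
  case vY: (v \in Yset); first by rewrite /gY vY fY_W.
  rewrite gY_nY ?vY //; move: vY; rewrite /Yset !inE.
  by case: (v \in W); case: (v \in Z).
have h4 := subset_leq_card h3.
have h5 : #|W :|: Z| <= #|W| + #|Z| by rewrite cardsU; lia.
lia.
Qed.

End Cons.

Lemma nt_witness u v : ~~ twin e u v -> exists y, [/\ y != u, y != v & e u y != e v y].
Proof.
rewrite /twin => H.
case: (boolP [exists y, (y \in nbhd e u :\ v) != (y \in nbhd e v :\ u)]).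
- move/existsP => [y]; rewrite !inE => Hy; exists y.
  case: (eqVneq y u) => [E | yu]; first by rewrite E eirr eqxx andbF /= in Hy.
  case: (eqVneq y v) => [E | yv]; first by rewrite E eirr eqxx andbF /= in Hy.
  by move: Hy; rewrite yu yv.
- move/existsPn => Hn; case/negP: H; apply/eqP/setP => y.
  by move: (Hn y); rewrite negbK => /eqP.
Qed.

Lemma diff1 a b (S : {set T}) :
  (dist_set e a S == 1) != (dist_set e b S == 1) -> dist_set e a S != dist_set e b S.
Proof. by apply: contra => /eqP ->; rewrite eqxx. Qed.

Lemma Ysize Z : #|Yset Z| <= #|T| - #|W|.
Proof.
have : #|Yset Z| <= #|~: W| by apply: subset_leq_card; apply/subsetP => x; rewrite inY inE => /andP[].
have := cardsC W; lia.
Qed.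

Lemma indep_bound w0 : w0 \in W -> {in W &, forall u v, u != v -> ~~ e u v} ->
  beta_p e <= #|W|.
Proof.
move=> w0W Hind.
have Ys : #|Yset set0| < #|W| by have := Ysize set0; lia.
have := cons_ok w0W Ys; rewrite cards0 addn0; apply.
move=> x xY; have xW : x \notin W by move: xY; rewrite inY => /andP[].
have fW := fY_W w0 Ys xY.
case ex: (e w0 x).
- exists (wu set0 w0); apply: diff1.
  have wW := wu_W w0 Ys.
  have fwu := wu_neq w0 Ys xY.
  rewrite !(ds_set1 (s := wu set0 w0) (Cl_wu w0 Ys)) //; last by apply: contraNneq xW => ->.
  rewrite esym -(transfer w0W wW xW) ex.
  by rewrite (negbTE (Hind _ _ fW wW fwu)).
- have [y [yf yx ey]] := nt_witness (notwin fW xW).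
  case yW: (y \in W).
  + move: ey; rewrite (negbTE (Hind _ _ fW yW _)); last by rewrite eq_sym.
    by rewrite esym -(transfer w0W yW xW) ex.
  + have yY : y \in Yset set0 by rewrite inY yW inE.
    exists y; apply: diff1.
    have fyW := fY_W w0 Ys yY.
    have ffy : fY set0 w0 x != fY set0 w0 y.
      by apply: contra_neq yx => /(fY_inj Ys xY yY) ->.
    have h1 : x != y by rewrite eq_sym.
    have h2 : x != fY set0 w0 y by apply/eqP => E; rewrite E fyW in xW.
    have h3 : fY set0 w0 x != y by apply/eqP => E; rewrite -E fW in yW.
    rewrite (ds_set2 (fun v => Cl_Y w0 Ys v yY) h1 h2).
    rewrite (ds_set2 (fun v => Cl_Y w0 Ys v yY) h3 ffy).
    rewrite (negbTE (Hind _ _ fW fyW ffy)) orbF.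
    rewrite [e x (fY _ _ y)]esym -(transfer w0W fyW xW) ex orbF.
    by rewrite eq_sym.
Qed.

Lemma ball_eq w w' k : twin e w w' -> e w w' -> ball e k.+1 w = ball e k.+1 w'.
Proof.
move=> tw eww; elim: k => [|k IH].
  apply/setP => y; rewrite !ball1.
  case: (eqVneq y w) => [-> | yw]; first by rewrite esym eww orbT.
  case: (eqVneq y w') => [-> | yw']; first by rewrite eww.
  by rewrite /= (twinE tw yw yw').
change (ball e k.+1 w :|: \bigcup_(v in ball e k.+1 w) nbhd e v =
        ball e k.+1 w' :|: \bigcup_(v in ball e k.+1 w') nbhd e v).
by rewrite IH.
Qed.

Lemma dist_twin w w' z : twin e w w' -> e w w' -> z != w -> z != w' ->
  dist e w z = dist e w' z.
Proof.
move=> tw eww zw zw'; rewrite /dist; apply: eq_find => -[|k].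
- by rewrite /= !inE (negbTE zw) (negbTE zw').
- by rewrite (ball_eq k tw eww).
Qed.

Lemma clique_lowerP w0 a (P : {set {set T}}) : clique e W -> w0 \in W -> a \notin W ->
  e w0 a -> locating e P -> #|W| < #|P|.
Proof.
move=> Hcl w0W aW ea /andP[Ppart /forallP Hloc].
move: Ppart => /and3P [/eqP cov tI _].
have inpb x : x \in pblock P x by rewrite mem_pblock cov inE.
have pbP x : pblock P x \in P by apply: pblock_mem; rewrite cov inE.
have same u v : pblock P u = pblock P v -> u != v ->
    (forall S, S \in P -> u \notin S -> v \notin S -> dist_set e u S = dist_set e v S) -> False.
  move=> puv uv H; move: (Hloc u) => /forallP /(_ v); rewrite uv /= => /existsP [S /andP [SP dS]].
  case uS: (u \in S).
    have E : pblock P u = S by apply: def_pblock.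
    have vS : v \in S by rewrite -E puv inpb.
    by rewrite (ds_in e hn uS) (ds_in e hn vS) in dS.
  case vS: (v \in S).
    have E : pblock P v = S by apply: def_pblock.
    by move: uS; rewrite -E -puv inpb.
  by move: dS; rewrite H ?uS ?vS // eqxx.
have inj : {in W &, injective (pblock P)}.
  move=> w w' wW w'W pw; apply/eqP/negPn/negP => ww'.
  apply: (same w w' pw ww') => S SP wS w'S; rewrite /dist_set; apply: eq_bigr => z zS.
  apply: dist_twin; first exact: Wtw.
  - exact: Hcl.
  - by apply: contraNneq wS => <-.
  - by apply: contraNneq w'S => <-.
have sub : pblock P @: W \subset P by apply/subsetP => B /imsetP [w _ ->].
have c1 := card_in_imset inj.
rewrite ltnNge; apply/negP => cP.
have EP : pblock P @: W = P by apply/eqP; rewrite eqEcard sub c1 cP.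
have : pblock P a \in pblock P @: W by rewrite EP.
case/imsetP => w wW paw.
have aw : a != w by apply: contraNneq aW => ->.
apply: (same a w paw aw) => S SP aS wS.
move: SP; rewrite -EP => /imsetP [w' w'W ES].
have w'S : w' \in S by rewrite ES inpb.
have ww' : w != w' by apply: contraNneq wS => ->.
rewrite (ds_1 hn aS w'S) ?(ds_1 hn wS w'S) //; first exact: Hcl.
by rewrite esym -(transfer w0W w'W aW).
Qed.

Lemma clique_lower w0 a : clique e W -> w0 \in W -> a \notin W -> e w0 a ->
  #|W| < beta_p e.
Proof.
move=> Hcl w0W aW ea; rewrite /beta_p.
apply: (big_ind (fun x => #|W| < x)).
- have : #|W| < #|W| + #|~: W|.
    rewrite -ltn_subLR ?subnn //; apply/card_gt0P; exists a; by rewrite inE.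
  by rewrite cardsC.
- by move=> x y; rewrite leq_min => -> ->.
- by move=> P HP; exact: (clique_lowerP Hcl w0W aW ea HP).
Qed.

Lemma cross_edge p u : u \in W -> path e u p -> last u p \notin W ->
  exists w a, [/\ w \in W, a \notin W & e w a].
Proof.
elim: p u => [|b p IH] u uW /=; first by rewrite uW.
move=> /andP [eub pth] lst; case bW: (b \in W); first exact: IH bW pth lst.
by exists u, b; rewrite bW.
Qed.

Section CliqueUp.
Variable w0 : T.
Hypothesis w0W : w0 \in W.
Hypothesis Hcl : clique e W.

Definition Aset := [set x | (x \notin W) && e w0 x].
Definition Fr a z := [&& z \notin W, a != z & e a z != e w0 z].
Definition domb (Z : {set T}) :=
  (Z \subset ~: W) && [forall a in Aset, (a \in Z) || [exists z in Z, Fr a z]].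

Lemma Fr_wit a : a \in Aset -> exists z, Fr a z.
Proof.
rewrite inE => /andP [aW ea].
have [y [yw ya ey]] := nt_witness (notwin w0W aW).
have yW : y \notin W.
  apply/negP => yW; have hw : e w0 y by apply: Hcl => //; rewrite eq_sym.
  by move: ey; rewrite hw esym (transfer yW w0W aW) ea.
exists y; rewrite /Fr yW eq_sym ya /= eq_sym; exact: ey.
Qed.

Lemma Fr_sym a b : a \in Aset -> b \in Aset -> Fr b a -> Fr a b.
Proof.
rewrite !inE => /andP [aW ea] /andP [bW eb] /and3P [_ ba H].
by rewrite /Fr bW eq_sym ba eb /= esym; move: H; rewrite ea.
Qed.

Lemma clique_upper : exists Z : {set T},
  [/\ Z \subset ~: W, 2 * #|Z| <= #|T| - #|W| & beta_p e <= #|W| + #|Z|].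
Proof.
have domT : domb (~: W).
  rewrite /domb subxx /=; apply/forall_inP => a; rewrite !inE => /andP [aW _].
  by rewrite aW.
case: (arg_minnP (fun Z : {set T} => #|Z|) domT) => Z0 /andP [Z0W /forall_inP domZ0] minZ0.
set Y := ~: W :\: Z0.
have domY : forall a, a \in Aset -> (a \in Y) || [exists z in Y, Fr a z].
  move=> a aA; case aZ: (a \in Z0).
  - case: (boolP [exists z in Y, Fr a z]) => [H | /exists_inPn Hn]; first by apply/orP; right.
    exfalso.
    have domZ' : domb (Z0 :\ a).
      rewrite /domb; apply/andP; split.
        by apply: subset_trans Z0W; apply: subD1set.
      apply/forall_inP => b bA.
      case: (eqVneq b a) => [-> | ba].
      + have [z1 Fz] := Fr_wit aA.
        have z1Z : z1 \in Z0.
          apply/negPn/negP => z1Z; move: (Hn z1); rewrite Fz.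
          move: Fz => /and3P [z1W _ _]; by rewrite !inE z1W z1Z => /(_ isT).
        apply/orP; right; apply/exists_inP; exists z1 => //.
        move: Fz => /and3P [_ az1 _]; by rewrite !inE z1Z eq_sym az1.
      + case bZ: (b \in Z0); first by rewrite !inE ba bZ.
        move: (domZ0 b bA); rewrite bZ /= => /exists_inP [z zZ Fz].
        case: (eqVneq z a) => [E | za].
        * subst z; have Fab := Fr_sym aA bA Fz.
          move: (Hn b); rewrite Fab; move: bA; rewrite inE => /andP [bW _].
          by rewrite !inE bW bZ => /(_ isT).
        * apply/orP; right; apply/exists_inP; exists z => //; by rewrite !inE za zZ.
    have := minZ0 _ domZ'.
    by rewrite (cardsD1 a Z0) aZ add1n ltnn.
  - move: aA; rewrite !inE aZ => /andP [-> _]; by [].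
have cY : #|Z0| <= #|Y|.
  apply: minZ0; rewrite /domb; apply/andP; split; first exact: subsetDl.
  by apply/forall_inP.
have cYZ : #|Y| + #|Z0| = #|~: W|.
  rewrite /Y cardsD (setIidPr Z0W); have : #|Z0| <= #|~: W| by apply: subset_leq_card.
  lia.
have cW := cardsC W.
have Ys : #|Yset Z0| < #|W| by rewrite /Yset -/Y; lia.
exists Z0; split => //; first lia.
apply: (cons_ok w0W Ys) => x xY.
have xW : x \notin W by move: xY; rewrite inY => /andP [].
have xZ : x \notin Z0 by move: xY; rewrite inY => /andP [].
have fW := fY_W w0 Ys xY.
case ex: (e w0 x).
- have xA : x \in Aset by rewrite inE xW ex.
  move: (domZ0 x xA); rewrite (negbTE xZ) /= => /exists_inP [z zZ /and3P [zW xz Hz]].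
  exists z; apply: diff1.
  have fz : fY Z0 w0 x != z by apply/eqP => E; rewrite -E fW in zW.
  rewrite (ds_set1 (fun v => Cl_Z w0 Ys v zZ zW) xz).
  rewrite (ds_set1 (fun v => Cl_Z w0 Ys v zZ zW) fz).
  by rewrite (transfer fW w0W zW).
- exists (wu Z0 w0); apply: diff1.
  have wW := wu_W w0 Ys.
  have fwu := wu_neq w0 Ys xY.
  have xwu : x != wu Z0 w0 by apply/eqP => E; rewrite E wW in xW.
  rewrite (ds_set1 (Cl_wu w0 Ys) xwu) (ds_set1 (Cl_wu w0 Ys) fwu).
  by rewrite esym -(transfer w0W wW xW) ex Hcl.
Qed.

End CliqueUp.

Lemma main_iff h : (forall u v, connect e u v) -> ~ complete_graph e ->
  beta_p e + h = #|T| ->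
  ((#|T| <= #|W| + 2 * h /\ #|W| + h + 1 <= #|T|) <-> clique e W).
Proof.
move=> conn ncomp hb.
have [w0 w0W] := W0.
split.
- move=> [h1 h2].
  case: (boolP [forall u in W, forall v in W, (u != v) ==> e u v]) => [H | H].
    move=> u v uW vW uv; move/forall_inP: H => /(_ u uW) /forall_inP /(_ v vW).
    by rewrite uv.
  exfalso; move/forall_inPn: H => [u uW] /forall_inPn [v vW]; rewrite negb_imply.
  move=> /andP [uv euv].
  have Hind : {in W &, forall p q, p != q -> ~~ e p q}.
    by move=> p q pW qW pq; rewrite -(Wadj uW vW pW qW uv pq).
  have := indep_bound w0W Hind; lia.
- move=> Hcl.
  case: (boolP [exists x, x \notin W]) => [/existsP [x xW] | /existsPn H]; last first.
    exfalso; apply: ncomp => u v uv; apply: Hcl => //; by apply/negPn; apply: H.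
  have [p pth lst] := connectP (conn w0 x).
  have [w [a [wW aW ewa]]] : exists w a, [/\ w \in W, a \notin W & e w a].
    by apply: (cross_edge w0W pth); rewrite -lst.
  have ea : e w0 a by rewrite (transfer w0W wW aW).
  have lo := clique_lower Hcl w0W aW ea.
  have [Z [_ cZ up]] := clique_upper w0W Hcl.
  lia.
Qed.

End Main.

Theorem corollary19 (T : finType) (e : rel T) (h tau : nat) (W : {set T}) :
  simple_connected_graph e ->
  1 < #|T| ->
  ~ complete_graph e ->
  beta_p e + h = #|T| ->
  twin_number e = tau ->
  #|T| < 2 * tau ->
  tau_set e W ->
  ((#|T| <= tau + 2 * h /\ tau + h + 1 <= #|T|) <-> clique e W).
Proof.
move=> [esym eirr conn] hn ncomp hb htau hbig [Wtw Wcard].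
have Wc : #|W| = tau by rewrite Wcard.
rewrite -Wc in hbig *.
exact: (main_iff esym eirr hn Wtw Wcard hbig conn ncomp hb).
Qed.
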